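(* Let $W$ be a finite Weyl group, $w\in W$, and $U\subseteq V$ a subspace. If $\mathcal{I}(w)$ is supersolvable, then $\mathcal{I}(\mathrm{fl}_U(w))$ is supersolvable.
   Context: $W$ is a finite Weyl group with root system $R\subset V$, positive roots $R^+$, negative roots $R^-$; $I(w)=\{\alpha\in R^+:w^{-1}\alpha\in R^-\}$, $\mathcal{I}(w)$ the arrangement of hyperplanes $\ker\alpha$, $\alpha\in I(w)$. $R_U=R\cap U$ is a root system with Weyl group $W_U$; $\mathrm{fl}_U(w)\in W_U$ is the unique element whose inversion set (w.r.t. positive roots $R^+\cap U$) is $I(w)\cap U$. A central arrangement is supersolvable if its intersection lattice (flats ordered by reverse inclusion) has a maximal chain of modular elements, where a flat $X$ is modular if $\mathrm{rk}(X)+\mathrm{rk}(Y)=\mathrm{rk}(X\wedge Y)+\mathrm{rk}(X\vee Y)$ for all flats $Y$. *)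

(* Defs.v *)
From HB Require Import structures.
From mathcomp Require Import all_boot all_order all_algebra.
Set Implicit Arguments. Unset Strict Implicit. Unset Printing Implicit Defensive.
Import Order.TTheory GRing.Theory Num.Theory.
Local Open Scope ring_scope.

Section Weyl.
Variables (R : realFieldType) (n : nat).
Local Notation vec := 'rV[R]_n.

Definition dot (u v : vec) : R := (u *m v^T) 0 0.

(* reflection s_a, acting on row vectors on the right: v *m refl a *)
Definition refl (a : vec) : 'M[R]_n :=
  1%:M - (2 / dot a a) *: (a^T *m a).

Definition rowsmx (s : seq vec) : 'M[R]_(size s, n) := \matrix_(i < size s) s`_i.

(* reduced crystallographic root system in V (spanning V) *)
Definition root_system (Phi : seq vec) : Prop :=
  [/\ 0 \notin Phi,
      (forall a b, a \in Phi -> b \in Phi -> b *m refl a \in Phi),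
      (forall a b, a \in Phi -> b \in Phi ->
          exists z : int, 2 * dot b a / dot a a = z%:~R),
      (forall a (k : R), a \in Phi -> k *: a \in Phi -> k = 1 \/ k = -1)
    & \rank (rowsmx Phi) = n].

Definition in_weyl (Phi : seq vec) (w : 'M[R]_n) : Prop :=
  exists s : seq vec, all (fun a => a \in Phi) s /\
    w = foldr (fun a m => refl a *m m) 1%:M s.

Definition regular (Phi : seq vec) (c : vec) : Prop :=
  forall a, a \in Phi -> dot a c != 0.
Definition pos_root (Phi : seq vec) (c : vec) (a : vec) : bool :=
  (a \in Phi) && (0 < dot a c).
Definition neg_root (Phi : seq vec) (c : vec) (a : vec) : bool :=
  (a \in Phi) && (dot a c < 0).

Definition inv_set (Phi : seq vec) (c : vec) (w : 'M[R]_n) : seq vec :=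
  [seq a <- Phi | pos_root Phi c a && neg_root Phi c (a *m invmx w)].

(* R_U = R cap U, U given as the row space of a matrix *)
Definition restr (Phi : seq vec) (U : 'M[R]_n) : seq vec :=
  [seq a <- Phi | (a <= U)%MS].

(* ---- hyperplane arrangements {ker a : a in A} and their intersection lattice *)
Definition colsmx (s : seq vec) : 'M[R]_(n, size s) := (rowsmx s)^T.
(* the flat  cap_{a in s} ker a  (as a row space) *)
Definition flatmx (s : seq vec) : 'M[R]_n := kermx (colsmx s).

Definition is_flat (A : seq vec) (X : 'M[R]_n) : Prop :=
  exists s : seq vec, {subset s <= A} /\ (X == flatmx s)%MS.

(* lattice order: reverse inclusion *)
Definition fle (X Y : 'M[R]_n) : bool := (Y <= X)%MS.
Definition flt (X Y : 'M[R]_n) : bool := fle X Y && ~~ fle Y X.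
(* rank of a flat = codimension *)
Definition frk (X : 'M[R]_n) : nat := (n - \rank X)%N.

Definition is_meet (A : seq vec) (Z X Y : 'M[R]_n) : Prop :=
  [/\ is_flat A Z, fle Z X, fle Z Y &
      forall Z', is_flat A Z' -> fle Z' X -> fle Z' Y -> fle Z' Z].
Definition is_join (A : seq vec) (Z X Y : 'M[R]_n) : Prop :=
  [/\ is_flat A Z, fle X Z, fle Y Z &
      forall Z', is_flat A Z' -> fle X Z' -> fle Y Z' -> fle Z Z'].

Definition modular (A : seq vec) (X : 'M[R]_n) : Prop :=
  is_flat A X /\
  forall Y Z Z', is_flat A Y -> is_meet A Z X Y -> is_join A Z' X Y ->
    (frk X + frk Y = frk Z + frk Z')%N.

Definition covers (A : seq vec) (X Y : 'M[R]_n) : Prop :=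
  flt X Y /\ ~ (exists Z, is_flat A Z /\ flt X Z /\ flt Z Y).

(* maximal chain V = X_0 < X_1 < ... < X_k = center of modular flats *)
Definition supersolvable (A : seq vec) : Prop :=
  exists (k : nat) (X : nat -> 'M[R]_n),
    [/\ (X 0%N == flatmx [::])%MS, (X k == flatmx A)%MS,
        (forall i, (i < k)%N -> covers A (X i) (X i.+1))
      & (forall i, (i <= k)%N -> modular A (X i))].

End Weyl.

(* Main.v *)
Require Import Defs.
From HB Require Import structures.
From mathcomp Require Import all_boot all_order all_algebra.
From mathcomp Require Import zify.
Set Implicit Arguments. Unset Strict Implicit. Unset Printing Implicit Defensive.
Import Order.TTheory GRing.Theory Num.Theory.
Local Open Scope ring_scope.

Section S.
Variables (R : realFieldType) (n : nat).
Local Notation vec := 'rV[R]_n.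
Implicit Types (s t : seq vec) (X Y Z T : 'M[R]_n).

Lemma sub_flatmxP m (S : 'M[R]_(m, n)) s :
  reflect (forall a, a \in s -> S *m a^T = 0) (S <= flatmx s)%MS.
Proof.
rewrite /flatmx; apply: (iffP sub_kermxP) => [H a aS | H].
  apply/matrixP => i k.
  transitivity ((S *m colsmx s) i (Ordinal (etrans (index_mem a s) aS))); last by rewrite H !mxE.
  rewrite !mxE [k]ord1; apply: eq_bigr => l _.
  by rewrite !mxE /= nth_index.
apply/matrixP => i j.
transitivity ((S *m (s`_j)^T) i 0); last by rewrite H ?mxE // mem_nth.
rewrite !mxE; apply: eq_bigr => l _; by rewrite !mxE.
Qed.

Lemma kill_sub m1 m2 (S1 : 'M[R]_(m1, n)) (S2 : 'M[R]_(m2, n)) (a : vec) :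
  (S1 <= S2)%MS -> S2 *m a^T = 0 -> S1 *m a^T = 0.
Proof. by case/submxP => D -> H; rewrite -mulmxA H mulmx0. Qed.

Lemma flatmx_subset s t : {subset s <= t} -> (flatmx t <= flatmx s)%MS.
Proof.
move=> st; apply/sub_flatmxP => a /st aT.
exact: (sub_flatmxP _ _ (submx_refl (flatmx t))).
Qed.

Lemma flatmx_cat s t : (flatmx (s ++ t) == flatmx s :&: flatmx t)%MS.
Proof.
apply/andP; split.
  by rewrite sub_capmx; apply/andP; split; apply: flatmx_subset => a ai;
    rewrite mem_cat ai ?orbT.
apply/sub_flatmxP => a; rewrite mem_cat => /orP[] ai.
  apply: (kill_sub (capmxSl _ _)); exact: (sub_flatmxP _ _ (submx_refl _)).
apply: (kill_sub (capmxSr _ _)); exact: (sub_flatmxP _ _ (submx_refl _)).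
Qed.

Lemma eqmx_trans' X Y Z : (X == Y)%MS -> (Y == Z)%MS -> (X == Z)%MS.
Proof.
move=> /andP[h1 h2] /andP[h3 h4]; apply/andP; split; [exact: submx_trans h1 h3 | exact: submx_trans h4 h2].
Qed.
Lemma eqmx_sym' X Y : (X == Y)%MS -> (Y == X)%MS.
Proof. by move=> /andP[h1 h2]; apply/andP. Qed.
Lemma eqmx_refl' X : (X == X)%MS.
Proof. by rewrite !submx_refl. Qed.

Lemma is_flat_eq A X Y : is_flat A X -> (X == Y)%MS -> is_flat A Y.
Proof.
move=> [s [sA Xs]] XY; exists s; split => //.
exact: eqmx_trans' (eqmx_sym' XY) Xs.
Qed.

Lemma is_flat_cap A X T : is_flat A X -> is_flat A T -> is_flat A (X :&: T)%MS.
Proof.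
move=> [s [sA /andP[h1 h2]]] [t [tA /andP[h3 h4]]]; exists (s ++ t); split.
  by move=> a; rewrite mem_cat => /orP[] /[dup] ? ?; [apply: sA | apply: tA].
apply: (eqmx_trans' _ (eqmx_sym' (flatmx_cat s t))).
apply/andP; split.
  by rewrite sub_capmx (submx_trans (capmxSl _ _) h1) (submx_trans (capmxSr _ _) h3).
by rewrite sub_capmx (submx_trans (capmxSl _ _) h2) (submx_trans (capmxSr _ _) h4).
Qed.

Lemma double_orth s (a : vec) : flatmx s *m a^T = 0 -> (a <= rowsmx s)%MS.
Proof.
move=> H.
have Ka : (a <= kermx (flatmx s)^T)%MS.
  by apply/sub_kermxP; rewrite -[a]trmxK -trmx_mul H trmx0.
have MK : (rowsmx s <= kermx (flatmx s)^T)%MS.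
  apply/sub_kermxP; rewrite -[rowsmx s]trmxK -trmx_mul.
  by have := mulmx_ker (colsmx s); rewrite /flatmx /colsmx => ->; rewrite trmx0.
have rk : (\rank (kermx (flatmx s)^T) <= \rank (rowsmx s))%N.
  rewrite mxrank_ker mxrank_tr /flatmx mxrank_ker /colsmx mxrank_tr.
  have := rank_leq_col (rowsmx s); lia.
have := geq_leqif (mxrank_leqif_sup MK); rewrite rk => /esym KM.
exact: submx_trans Ka KM.
Qed.

Definition cl A (S : 'M[R]_n) := flatmx [seq a <- A | S *m a^T == 0].

Lemma cl_meet A X T : is_flat A X -> is_flat A T -> is_meet A (cl A (X + T)%MS) X T.
Proof.
move=> fX fT; have XTcl : (X + T <= cl A (X + T)%MS)%MS.
  by apply/sub_flatmxP => a; rewrite mem_filter => /andP[/eqP].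
split.
- by exists [seq a <- A | (X + T)%MS *m a^T == 0]; split;
    [move=> a; rewrite mem_filter => /andP[] | exact: eqmx_refl'].
- exact: submx_trans (addsmxSl _ _) XTcl.
- exact: submx_trans (addsmxSr _ _) XTcl.
move=> Z' [s' [s'A /andP[h1 h2]]] XZ TZ; rewrite /fle.
apply: (submx_trans _ h2); apply: flatmx_subset => a aS.
rewrite mem_filter s'A // andbT; apply/eqP.
have XT : (X + T <= flatmx s')%MS by rewrite addsmx_sub (submx_trans XZ h1) (submx_trans TZ h1).
exact: (sub_flatmxP _ _ XT).
Qed.

Lemma cap_join A X T : is_flat A X -> is_flat A T -> is_join A (X :&: T)%MS X T.
Proof.
move=> fX fT; split; rewrite /fle ?capmxSl ?capmxSr //; first exact: is_flat_cap.
by move=> Z' _ h1 h2; rewrite sub_capmx h1 h2.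
Qed.

Lemma modular_sum A X T : modular A X -> is_flat A T -> is_flat A (X + T)%MS.
Proof.
move=> [fX Hm] fT.
have := Hm _ _ _ fT (cl_meet fX fT) (cap_join fX fT).
have := mxrank_sum_cap X T; rewrite /frk.
have := rank_leq_col X; have := rank_leq_col T; have := rank_leq_col (X :&: T)%MS.
have := rank_leq_col (cl A (X + T)%MS) => r1 r2 r3 r4 e1 e2.
have [_ h1 h2 _] := cl_meet fX fT; rewrite /fle in h1 h2.
have XTcl : (X + T <= cl A (X + T)%MS)%MS by rewrite addsmx_sub h1 h2.
have := geq_leqif (mxrank_leqif_sup XTcl).
have -> : (\rank (cl A (X + T)%MS) <= \rank (X + T)%MS)%N by lia.
move=> /esym clXT.
have [fcl _ _ _] := cl_meet fX fT.
by apply: is_flat_eq fcl _; apply/andP.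
Qed.

Lemma sum_modular A X : is_flat A X ->
  (forall T, is_flat A T -> is_flat A (X + T)%MS) -> modular A X.
Proof.
move=> fX H; split => // T Z Z' fT [_ h1 h2 hm] [_ j1 j2 jm].
have e1 : \rank Z = \rank (X + T)%MS.
  rewrite /fle in h1 h2; apply/eqP; rewrite eqn_leq mxrankS; last first.
    exact: hm (H _ fT) (addsmxSl _ _) (addsmxSr _ _).
  by rewrite mxrankS // addsmx_sub h1 h2.
have e2 : \rank Z' = \rank (X :&: T)%MS.
  rewrite /fle in j1 j2; apply/eqP; rewrite eqn_leq mxrankS; last by rewrite sub_capmx j1 j2.
  by rewrite mxrankS //; exact: jm (is_flat_cap fX fT) (capmxSl _ _) (capmxSr _ _).
have := mxrank_sum_cap X T; rewrite /frk e1 e2.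
have := rank_leq_col X; have := rank_leq_col T; have := rank_leq_col (X :&: T)%MS.
have := rank_leq_col (X + T)%MS; lia.
Qed.


Lemma cover_rank A X Y : is_flat A X -> is_flat A Y -> covers A X Y ->
  \rank X = (\rank Y).+1.
Proof.
move=> fX fY [/andP[YX nXY] nob]; rewrite /fle in YX nXY.
have fY' := fY; case: fY' => s [sA /andP[Ys sY]].
have : has (fun a => X *m a^T != 0) s.
  apply/negPn/negP => /hasPn Hn; apply: (negP nXY).
  apply: submx_trans sY; apply/sub_flatmxP => a aS.
  by apply/eqP; move: (Hn a aS); rewrite negbK.
case/hasP => a aS Xa.
pose Z := (X :&: flatmx [:: a])%MS.
have fZ : is_flat A Z.
  apply: is_flat_cap fX _; exists [:: a]; split; last exact: eqmx_refl'.
  by move=> b; rewrite inE => /eqP ->; apply: sA.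
have YZ : (Y <= Z)%MS.
  rewrite sub_capmx YX /=; apply: submx_trans Ys _; apply: flatmx_subset.
  by move=> b; rewrite inE => /eqP ->.
have nXZ : ~~ (X <= Z)%MS.
  rewrite sub_capmx submx_refl /=; apply/negP => /sub_flatmxP H.
  by move: Xa; rewrite H ?inE ?eqxx.
have ZY : (Z <= Y)%MS.
  apply/negPn/negP => nZY; apply: nob; exists Z; split => //; split.
    by rewrite /flt /fle capmxSl.
  by rewrite /flt /fle YZ.
have rYZ : \rank Y = \rank Z by apply/eqP; rewrite eqn_leq !mxrankS.
have lt : (\rank Z < \rank X)%N.
  by rewrite (ltn_leqif (mxrank_leqif_sup (capmxSl _ _))).
have := mxrank_sum_cap X (flatmx [:: a]).
have := rank_leq_col (X + flatmx [:: a])%MS.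
rewrite /flatmx mxrank_ker.
have := rank_leq_col (colsmx [:: a]); rewrite /= -/(flatmx [:: a]) -/Z.
lia.
Qed.

Lemma dedup (P : 'M[R]_n -> Prop) (f : nat -> 'M[R]_n) k :
  (forall i, (i < k)%N -> (f i.+1 <= f i)%MS /\ (\rank (f i) <= (\rank (f i.+1)).+1)%N) ->
  (forall i, (i <= k)%N -> P (f i)) ->
  exists k' (g : nat -> 'M[R]_n),
    [/\ (g 0%N == f 0%N)%MS, (g k' == f k)%MS,
        (forall i, (i < k')%N -> (g i.+1 <= g i)%MS /\ \rank (g i) = (\rank (g i.+1)).+1)
      & forall i, (i <= k')%N -> P (g i)].
Proof.
elim: k => [|k IH] Hs HP.
  exists 0%N, f; split => //; try exact: eqmx_refl'; by case.
have [k' [g [g0 gk gs gP]]] : exists k' (g : nat -> 'M[R]_n),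
    [/\ (g 0%N == f 0%N)%MS, (g k' == f k)%MS,
        (forall i, (i < k')%N -> (g i.+1 <= g i)%MS /\ \rank (g i) = (\rank (g i.+1)).+1)
      & forall i, (i <= k')%N -> P (g i)].
  by apply: IH => i ik; [apply: Hs; apply: ltnW | apply: HP; apply: leqW].
have [le1 rk1] := Hs k (ltnSn k).
have rk2 := mxrankS le1.
case: (eqVneq (\rank (f k)) (\rank (f k.+1))) => e.
  exists k', g; split => //; apply: eqmx_trans' gk _.
  apply: eqmx_sym'; rewrite -(geq_leqif (mxrank_leqif_eq le1)) e //.
exists k'.+1, (fun i => if i == k'.+1 then f k.+1 else g i); split.
- exact: g0.
- by rewrite eqxx eqmx_refl'.
- move=> i; rewrite ltnS leq_eqVlt => /orP[/eqP -> | ilt].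
    rewrite eqxx ifN ?(ltn_eqF (ltnSn k'))//.
    case/andP: gk => gk1 gk2; split; first exact: submx_trans le1 gk2.
    have : \rank (g k') = \rank (f k) by apply/eqP; rewrite eqn_leq !mxrankS.
    lia.
  rewrite !ifN; try (apply/negP => /eqP E; move: ilt; rewrite E ?ltnn // ltnNge leqnSn //).
  exact: gs.
- move=> i; case: eqP => [-> _ | /eqP ne]; first exact: HP.
  by rewrite leq_eqVlt (negbTE ne) ltnS /=; apply: gP.
Qed.


Lemma ss_restrict (A A' : seq vec) (U : 'M[R]_n) :
  A' =i [seq a <- A | (a <= U)%MS] -> supersolvable A -> supersolvable A'.
Proof.
move=> HA [k [X [X0 Xk cov md]]].
have A'sub : {subset A' <= A} by move=> a; rewrite HA mem_filter => /andP[].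
have inA' : forall a, a \in A -> (a <= U)%MS -> a \in A'.
  by move=> a aA aU; rewrite HA mem_filter aA aU.
pose Y0 := flatmx A'.
have fY0 : is_flat A Y0 by exists A'; split => //; exact: eqmx_refl'.
have A'U : (rowsmx A' <= U)%MS.
  apply/row_subP => i; rewrite rowK.
  by have := mem_nth 0 (ltn_ord i); rewrite HA mem_filter => /andP[].
have liftflat : forall Z, is_flat A Z -> (Y0 <= Z)%MS -> is_flat A' Z.
  move=> Z [s [sA Zs]] YZ; exists s; split => // a aS; apply: inA'; first exact: sA.
  apply: submx_trans A'U; apply: double_orth.
  case/andP: Zs => Zs _.
  exact: kill_sub (submx_trans YZ Zs) ((sub_flatmxP _ _ (submx_refl _)) a aS).
have flatA'A : forall T, is_flat A' T -> is_flat A T.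
  by move=> T [t [tA Tt]]; exists t; split => // a /tA; apply: A'sub.
have Y0le : forall T, is_flat A' T -> (Y0 <= T)%MS.
  move=> T [t [tA /andP[_ tT]]]; apply: submx_trans tT; exact: flatmx_subset.
pose f i := (X i + Y0)%MS.
have := @dedup (modular A') f k.
case.
- move=> i ik; have [/andP[le1 _] _] := cov i ik; rewrite /fle in le1.
  split; first by apply: addsmxS; rewrite ?submx_refl.
  have := cover_rank (md i (ltnW ik)).1 (md i.+1 ik).1 (cov i ik).
  have := mxrank_sum_cap (X i) Y0; have := mxrank_sum_cap (X i.+1) Y0.
  have := mxrankS (capmxS le1 (submx_refl Y0)).
  rewrite /f; lia.
- move=> i ik; apply: sum_modular.
    by apply: liftflat; [apply: modular_sum (md i ik) fY0 | exact: addsmxSr].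
  move=> T fT.
  have e : ((X i + T)%MS == (f i + T)%MS)%MS.
    apply/andP; split; first by apply: addsmxS; rewrite ?submx_refl ?addsmxSl.
    rewrite addsmx_sub addsmxSr andbT /f addsmx_sub addsmxSl /=.
    exact: submx_trans (Y0le _ fT) (addsmxSr _ _).
  apply: is_flat_eq e; apply: liftflat; first exact: modular_sum (md i ik) (flatA'A _ fT).
  exact: submx_trans (Y0le _ fT) (addsmxSr _ _).
move=> k' [g [g0 gk gs gP]].
exists k', g; split => //.
- apply: eqmx_trans' g0 _; apply/andP; split.
    by apply/sub_flatmxP => a; rewrite in_nil.
  case/andP: X0 => _ h; exact: submx_trans h (addsmxSl _ _).
- apply: eqmx_trans' gk _; apply/andP; split; last exact: addsmxSr.
  rewrite /f addsmx_sub submx_refl andbT; case/andP: Xk => h _.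
  exact: submx_trans h (flatmx_subset A'sub).
- move=> i ik; have [le1 r1] := gs i ik; split.
    rewrite /flt /fle le1 /=; apply/negP => h; have := mxrankS h; lia.
  move=> [Z [_ [/andP[h1 h2] /andP[h3 h4]]]]; rewrite /fle in h1 h2 h3 h4.
  have := ltn_leqif (mxrank_leqif_sup h1); rewrite h2 => l1.
  have := ltn_leqif (mxrank_leqif_sup h3); rewrite h4 => l2.
  lia.
Qed.

End S.

Theorem mainTheorem14 (R : realFieldType) (n : nat) (Phi : seq 'rV[R]_n)
    (c : 'rV[R]_n) (w U u : 'M[R]_n) :
  root_system Phi -> regular Phi c -> in_weyl Phi w ->
  supersolvable (inv_set Phi c w) ->
  (* u = fl_U(w): u in W_U, with inversion set (wrt R^+ cap U) = I(w) cap U *)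
  in_weyl (restr Phi U) u ->
  inv_set (restr Phi U) c u =i [seq a <- inv_set Phi c w | (a <= U)%MS] ->
  supersolvable (inv_set (restr Phi U) c u).
Proof.
move=> _ _ _ hs _ hi; exact: ss_restrict hi hs.
Qed.
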